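(* Let $M$ be a strong module of a dually-CPT poset $\mathbf{P}=(X,P)$. If $M$ is one-sided in some CPT representation of $\mathbf{P}$ and the subposet induced by $M$ has connected comparability graph, then $M$ is a clique module.
   Context: A CPT representation of $\mathbf{P}$ assigns to each $x\in X$ a path $W_x$ of a host tree $T$ with $x<y$ iff $W_x\subsetneq W_y$; $\mathbf{P}$ is dually-CPT if $\mathbf{P}$ and its dual both have such representations. A module is a set $M\subseteq X$ such that each $y\notin M$ is comparable to all or none of the elements of $M$; it is strong if for every module $M'$, $M\cap M'=\emptyset$, $M\subseteq M'$ or $M'\subseteq M$. A strong module is a clique module if the complement of its induced comparability graph is disconnected. In a CPT representation, a set of elements is one-sided if all their paths arrive at (have an endpoint at) a common vertex $a$ of $T$ and all of these paths, except possibly one trivial (single-vertex) path, pass through a common neighbour $b$ of $a$ in $T$. *)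

(* Defs.v *)
From mathcomp Require Import all_boot.
Set Implicit Arguments. Unset Strict Implicit. Unset Printing Implicit Defensive.

(* A poset P = (X, P) is given by a finite type X and its strict order
   relation P : rel X  (P x y means x < y). *)
Definition strict_order (X : finType) (P : rel X) : Prop :=
  (forall x, ~~ P x x) /\ (forall x y z, P x y -> P y z -> P x z).

Definition dual_rel (X : finType) (P : rel X) : rel X := fun x y => P y x.

Definition comparable (X : finType) (P : rel X) (x y : X) : bool :=
  P x y || P y x.

Definition is_tree (V : finType) (e : rel V) : Prop :=
  [/\ symmetric e, irreflexive e, (forall u v, connect e u v) &
      (forall (u : V) (s : seq V), uniq (u :: s) -> 2 <= size s ->
          path e u s -> ~~ e (last u s) u)].

Definition is_tree_path (V : finType) (e : rel V) (W : {set V}) : Prop :=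
  exists (u : V) (s : seq V), [/\ uniq (u :: s), path e u s & W = [set v in u :: s]].

(* CPT (containment of paths in a tree) representation of (X,P) on host tree (V,e) *)
Definition CPT_rep (X : finType) (P : rel X) (V : finType) (e : rel V)
    (W : X -> {set V}) : Prop :=
  [/\ is_tree e, (forall x, is_tree_path e (W x)) &
      (forall x y, P x y = (W x \proper W y))].

Definition CPT (X : finType) (P : rel X) : Prop :=
  exists (V : finType) (e : rel V) (W : X -> {set V}), CPT_rep P e W.

Definition dually_CPT (X : finType) (P : rel X) : Prop :=
  CPT P /\ CPT (dual_rel P).

Definition is_module (X : finType) (P : rel X) (M : {set X}) : Prop :=
  forall y, y \notin M ->
    (forall x, x \in M -> comparable P y x) \/
    (forall x, x \in M -> ~~ comparable P y x).

Definition strong_module (X : finType) (P : rel X) (M : {set X}) : Prop :=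
  is_module P M /\
  forall M' : {set X}, is_module P M' ->
    [\/ [disjoint M & M'], M \subset M' | M' \subset M].

Definition comp_graph_on (X : finType) (P : rel X) (M : {set X}) : rel X :=
  fun x y => [&& x \in M, y \in M & comparable P x y].

Definition incomp_graph_on (X : finType) (P : rel X) (M : {set X}) : rel X :=
  fun x y => [&& x \in M, y \in M, x != y & ~~ comparable P x y].

Definition connected_on (X : finType) (g : rel X) (M : {set X}) : Prop :=
  forall u v, u \in M -> v \in M -> connect g u v.

Definition disconnected_on (X : finType) (g : rel X) (M : {set X}) : Prop :=
  exists u v, [/\ u \in M, v \in M & ~~ connect g u v].

Definition clique_module (X : finType) (P : rel X) (M : {set X}) : Prop :=
  strong_module P M /\ disconnected_on (incomp_graph_on P M) M.

Definition endpoint (V : finType) (e : rel V) (W : {set V}) (a : V) : bool :=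
  (a \in W) && (#|[set v in W | e a v]| <= 1).

Definition one_sided (X : finType) (V : finType) (e : rel V)
    (W : X -> {set V}) (M : {set X}) : Prop :=
  exists (a b : V), [/\ e a b,
    (forall x, x \in M -> endpoint e (W x) a),
    (forall x, x \in M -> b \notin W x -> W x = [set a]) &
    (forall x y, x \in M -> y \in M -> b \notin W x -> b \notin W y -> x = y)].

(* Main.v *)
Require Import Defs.
From mathcomp Require Import all_boot.
Set Implicit Arguments. Unset Strict Implicit. Unset Printing Implicit Defensive.

Section Tree.
Variables (V : finType) (e : rel V).
Hypothesis esym : symmetric e.
Hypothesis acyc : forall (u : V) (s : seq V), uniq (u :: s) -> 2 <= size s ->
  path e u s -> ~~ e (last u s) u.

Lemma prefix_sub s1 : forall a s3, uniq (a :: s1) -> uniq (a :: s3) ->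
  path e a s1 -> path e a s3 -> {subset a :: s1 <= a :: s3} ->
  s1 = take (size s1) s3.
Proof.
elim: s1 => [|x s1 IH] a s3 U1 U3 P1 P3 S; first by rewrite take0.
have xa : x != a.
  by move: U1 => /= /andP[]; rewrite inE negb_or eq_sym => /andP[].
have := S x; rewrite !inE eqxx orbT /= => /(_ isT); rewrite (negbTE xa) /=.
case: s3 U3 P3 S => [|y s3] //= U3 P3 S xin.
have eax : e a x by move: P1 => /= /andP[].
case: (eqVneq x y) => [exy | nxy].
  subst y; congr (_ :: _).
  apply: (IH x s3).
  - by move: U1 => /= /andP[].
  - by move: U3 => /= /andP[].
  - by move: P1 => /= /andP[].
  - by move: P3 => /= /andP[].
  move=> z zin; have := S z; rewrite [z \in a :: _]in_cons zin orbT => /(_ isT).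
  rewrite in_cons; case/orP => // /eqP za.
  by move: U1; rewrite /= -za zin.
exfalso.
move: xin; rewrite inE (negbTE nxy) /= => xin.
case/splitPr: xin U3 P3 => p1 p2 U3 P3.
have Uq : uniq (a :: (y :: p1) ++ [:: x]).
  apply: (@subseq_uniq _ _ (a :: y :: p1 ++ x :: p2)); last exact U3.
  have -> : a :: y :: p1 ++ x :: p2 = (a :: (y :: p1) ++ [:: x]) ++ p2 by rewrite /= -catA.
  exact: prefix_subseq.
have Sz : 2 <= size ((y :: p1) ++ [:: x]) by rewrite size_cat /= addn1.
have Pt : path e a ((y :: p1) ++ [:: x]).
  by move: P3; rewrite /= !cat_path /= => /andP[-> /andP[-> /andP[-> _]]].
have H := acyc Uq Sz Pt.
by move: H; rewrite last_cat /= esym eax.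
Qed.

Lemma orient (u : V) s a : uniq (u :: s) -> path e u s -> a \in u :: s ->
  #|[set v in [set w in u :: s] | e a v]| <= 1 ->
  exists s', [/\ uniq (a :: s'), path e a s' & [set w in u :: s] = [set w in a :: s']].
Proof.
move=> U Pa ain Hc.
rewrite inE in ain; case/orP: ain => [/eqP -> | ain]; first by exists s.
case/splitPr: ain U Pa Hc => p1 p2 U Pa Hc.
case: p2 U Pa Hc => [|y p2] U Pa Hc.
  exists (rev (u :: p1)); split.
  - by rewrite -rev_rcons rev_uniq /= -cats1.
  - have := @rev_path _ e u (rcons p1 a).
    rewrite last_rcons belast_rcons => ->.
    rewrite (@eq_path _ _ e); first by rewrite -cats1.
    by move=> z w /=; rewrite esym.
  apply/setP => z; rewrite !in_set -rev_rcons mem_rev rcons_cons -cats1.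
  by [].
exfalso; move: Hc; apply/negP; rewrite -ltnNge.
have ew : e (last u p1) a.
  by move: Pa; rewrite cat_path /= => /and3P[].
have ey : e a y.
  by move: Pa; rewrite cat_path /= => /and3P[_ _ /andP[]].
have wy : last u p1 != y.
  apply/eqP => wy; move: U; rewrite -cat_cons cat_uniq => /and3P[_ + _].
  have yin : y \in [:: a, y & p2] by rewrite !inE eqxx orbT.
  move/hasPn/(_ y yin); rewrite -wy; apply/negP/negPn; exact: mem_last.
apply: (leq_trans _ (subset_leq_card (A := [set last u p1; y]) _)).
  by rewrite cards2 wy.
apply/subsetP => z; rewrite !inE => /orP[] /eqP ->.
  rewrite -esym ew andbT; have := mem_last u p1; rewrite in_cons => /orP[->//|H].
  by rewrite mem_cat H orbT.
by rewrite ey andbT mem_cat !inE eqxx !orbT.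
Qed.

Lemma prefix_cmp a s1 s2 s3 : uniq (a :: s1) -> uniq (a :: s2) -> uniq (a :: s3) ->
  path e a s1 -> path e a s2 -> path e a s3 ->
  {subset a :: s1 <= a :: s3} -> {subset a :: s2 <= a :: s3} ->
  {subset a :: s1 <= a :: s2} \/ {subset a :: s2 <= a :: s1}.
Proof.
move=> U1 U2 U3 P1 P2 P3 S1 S2.
rewrite (prefix_sub U1 U3 P1 P3 S1) (prefix_sub U2 U3 P2 P3 S2).
have gen : forall i j, i <= j -> {subset a :: take i s3 <= a :: take j s3}.
  move=> i j ij z; rewrite !in_cons => /orP[->//|zi].
  by rewrite -(take_takel s3 ij) in zi; rewrite (mem_take zi) orbT.
case: (leqP (size s1) (size s2)) => h; first by left; apply: gen.
by right; apply: gen; apply: ltnW.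
Qed.
End Tree.

Unset Implicit Arguments.
Set Strict Implicit.

Theorem mainTheorem9 (X : finType) (P : rel X) (M : {set X}) :
  strict_order P ->
  dually_CPT P ->
  strong_module P M ->
  2 <= #|M| ->
  (exists (V : finType) (e : rel V) (W : X -> {set V}),
      CPT_rep P e W /\ one_sided e W M) ->
  connected_on (comp_graph_on P M) M ->
  clique_module P M.
Proof.
move=> _ _ Hsm HM [V [e [W [[Htree Hpath HP] [a [b [_ Hend _ _]]]]]]] Hconn.
split => //.
case: Htree => esym _ _ acyc.
have rep : forall x, x \in M ->
    exists s, [/\ uniq (a :: s), path e a s & W x = [set w in a :: s]].
  move=> x xM; case: (Hpath x) => u [s [U Pa Wx]].
  have := Hend x xM; rewrite /endpoint Wx => /andP[ain Hc].
  apply: (orient esym U Pa) => //; by rewrite inE in ain.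
have F : forall x y z, x \in M -> y \in M -> z \in M ->
    W x \subset W z -> W y \subset W z -> (W x \subset W y) || (W y \subset W x).
  move=> x y z xM yM zM; case: (rep x xM) => s1 [U1 P1 ->].
  case: (rep y yM) => s2 [U2 P2 ->]; case: (rep z zM) => s3 [U3 P3 ->].
  move=> /subsetP S1 /subsetP S2.
  have S1' : {subset a :: s1 <= a :: s3}.
    by move=> w wi; have := S1 w; rewrite !inE => /(_ wi).
  have S2' : {subset a :: s2 <= a :: s3}.
    by move=> w wi; have := S2 w; rewrite !inE => /(_ wi).
  case: (prefix_cmp esym acyc U1 U2 U3 P1 P2 P3 S1' S2') => H; apply/orP; [left|right];
    apply/subsetP => w; rewrite !inE => /H.
    by rewrite !inE.
  by rewrite !inE.
have [u0 u0M] : exists u0, u0 \in M.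
  by apply/set0Pn; rewrite -card_gt0; apply: leq_trans HM.
case: (arg_minnP (fun x => #|W x|) u0M) => u uM umin.
have gen : forall p w, w \in M -> W u \subset W w ->
    path (comp_graph_on P M) w p -> W u \subset W (last w p).
  elim => [|y p IH] w wM Hw //= /andP[Ewy Pp].
  move: Ewy; rewrite /comp_graph_on /Defs.comparable => /and3P[_ yM].
  rewrite !HP => /orP[] Hpr; apply: (IH y yM _ Pp).
    exact: subset_trans Hw (proper_sub Hpr).
  case/orP: (F u y w uM yM wM Hw (proper_sub Hpr)) => // Hyw.
  have : W y == W u by rewrite eqEcard Hyw umin.
  by move/eqP ->.
have H : forall v, v \in M -> W u \subset W v.
  move=> v vM; case/connectP: (Hconn u v uM vM) => p Pp ->.
  exact: gen p u uM (subxx _) Pp.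
have [v vM Wv] : exists2 v, v \in M & W v != W u.
  case: (boolP [exists v in M, W v != W u]) => [/exists_inP//|].
  rewrite negb_exists_in => /forall_inP Hall.
  have : 0 < #|M :\ u| by move: HM; rewrite (cardsD1 u) (_ : u \in M = true).
  rewrite card_gt0 => /set0Pn [v]; rewrite !inE => /andP[vu vM].
  case/connectP: (Hconn u v uM vM) => [[|y p]] /=; first by move=> _ vu'; rewrite vu' eqxx in vu.
  case/andP => /and3P[_ yM]; rewrite /Defs.comparable !HP.
  have := Hall y yM; rewrite negbK => /eqP ->.
  by rewrite properxx.
exists u, v; split => //.
apply/negP => /connectP [p Pp vE].
have gen2 : forall p w, w \in M -> W w = W u ->
    path (incomp_graph_on P M) w p -> W (last w p) = W u.
  elim => [|y q IH] w wM Hw //= /andP[Ewy Pq].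
  move: Ewy; rewrite /incomp_graph_on /Defs.comparable => /and4P[_ yM _].
  move=> Hnc; apply: (IH y yM _ Pq); apply/eqP; apply: contraNT Hnc => Hy.
  by rewrite HP properEneq Hw H // eq_sym Hy.
have := gen2 p u uM erefl Pp; rewrite -vE => /eqP.
by rewrite (negbTE Wv).
Qed.
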